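(* Let $G$ be a group, $H\subseteq G$ a finite subgroup, and $A$ a unital left $\mathbb{C}H$-module algebra. Then $C_c(G,A)^{\mathbb{C}H}\#\mathbb{C}G$ and $A\#\mathbb{C}H$ are Morita equivalent (as rings with local units).
   Context: Over $\mathbb{C}$. A left $\mathbb{C}H$-module algebra is an algebra $A$ with an action of $H$ by algebra automorphisms $a\mapsto h\rightharpoonup a$. $C_c(G,A)^{\mathbb{C}H}=\{f:G\to A \text{ finitely supported}: h\rightharpoonup f(g)=f(hg)\ \forall h\in H, g\in G\}$, an algebra under pointwise multiplication, with left $G$-action $(t\rightharpoonup f)(g)=f(gt)$. The smash product $C_c(G,A)^{\mathbb{C}H}\#\mathbb{C}G$ is $C_c(G,A)^{\mathbb{C}H}\otimes\mathbb{C}G$ with product $(F\#s)(F'\#t)=F(s\rightharpoonup F')\#st$; $A\#\mathbb{C}H$ is $A\otimes\mathbb{C}H$ with product $(a\#h)(b\#k)=a(h\rightharpoonup b)\#hk$. A ring $R$ has local units if every finite subset $T\subseteq R$ admits an idempotent $e$ with $te=et=t$ for all $t\in T$; a left $R$-module $M$ is unital if $RM=M$. Two rings with local units are Morita equivalent if their categories of unital left modules are equivalent. *)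

(* Defs.v *)
From HB Require Import structures.
From mathcomp Require Import all_boot all_order all_algebra.
From mathcomp Require Import boolp classical_sets cardinality fsbigop.
From mathcomp Require Import Rstruct complex.
From mathcomp Require monoid.

Set Implicit Arguments.
Unset Strict Implicit.
Unset Printing Implicit Defensive.

Import GRing.Theory.
Local Open Scope ring_scope.
Local Open Scope classical_set_scope.

Definition CC : fieldType := complex Rdefinitions.R.

Definition gmul {G : groupType} (x y : G) : G := monoid.mul x y.
Definition ginv {G : groupType} (x : G) : G := monoid.inv x.
Definition gone (G : groupType) : G := @monoid.one G.

(* A (not necessarily unital) ring is presented as a subset [pr_mem]  *)
(* of an ambient type [pr_car] carrying an addition and a             *)
(* multiplication; the ring is the subset [pr_mem] with the inherited *)
(* operations (in the instances below, [pr_mem] is closed under them). *)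

Record prering := PreRing {
  pr_car : Type;
  pr_add : pr_car -> pr_car -> pr_car;
  pr_mul : pr_car -> pr_car -> pr_car;
  pr_mem : pr_car -> Prop }.
Arguments pr_add : clear implicits.
Arguments pr_mul : clear implicits.
Arguments pr_mem : clear implicits.

Definition has_local_units (R : prering) : Prop :=
  forall T : seq (pr_car R), (forall t, List.In t T -> pr_mem R t) ->
  exists e, pr_mem R e /\ pr_mul R e e = e /\
    (forall t, List.In t T -> pr_mul R t e = t /\ pr_mul R e t = t).

Record lmodule (R : prering) := LModule {
  lm_car :> zmodType;
  lm_act : pr_car R -> lm_car -> lm_car;
  lm_actD : forall r, pr_mem R r -> forall m n : lm_car,
      lm_act r (m + n) = lm_act r m + lm_act r n;
  lm_addD : forall r s, pr_mem R r -> pr_mem R s -> forall m,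
      lm_act (pr_add R r s) m = lm_act r m + lm_act s m;
  lm_mulA : forall r s, pr_mem R r -> pr_mem R s -> forall m,
      lm_act (pr_mul R r s) m = lm_act r (lm_act s m) }.
Arguments lm_act {R} l _ _.

Definition unital_module (R : prering) (M : lmodule R) : Prop :=
  forall m : M, exists l : seq (pr_car R * M),
    (forall p, List.In p l -> pr_mem R p.1) /\
    m = \sum_(p <- l) lm_act M p.1 p.2.

Record umodule (R : prering) := UModule {
  um_mod :> lmodule R;
  um_unital : unital_module um_mod }.

Record mhom (R : prering) (M N : lmodule R) := MHom {
  mh_fun :> M -> N;
  mh_add : forall x y, mh_fun (x + y) = mh_fun x + mh_fun y;
  mh_act : forall r, pr_mem R r -> forall x,
      mh_fun (lm_act M r x) = lm_act N r (mh_fun x) }.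

Definition is_functor (R S : prering) (F : umodule R -> umodule S)
  (Fm : forall M N : umodule R, mhom M N -> mhom (F M) (F N)) : Prop :=
  (forall (M : umodule R) (f : mhom M M), (forall x, f x = x) ->
      forall y, Fm M M f y = y) /\
  (forall (M N P : umodule R) (f : mhom M N) (g : mhom N P) (h : mhom M P),
      (forall x, h x = g (f x)) ->
      forall y, Fm M P h y = Fm N P g (Fm M N f y)).

Definition morita_equivalent (R S : prering) : Prop :=
  exists (F : umodule R -> umodule S)
         (Fm : forall M N : umodule R, mhom M N -> mhom (F M) (F N))
         (G : umodule S -> umodule R)
         (Gm : forall M N : umodule S, mhom M N -> mhom (G M) (G N))
         (eta : forall M : umodule R, mhom (G (F M)) M)
         (eps : forall N : umodule S, mhom (F (G N)) N),
    is_functor Fm /\ is_functor Gm /\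
    (forall M, bijective (eta M)) /\
    (forall (M N : umodule R) (f : mhom M N) x,
        f (eta M x) = eta N (Gm _ _ (Fm M N f) x)) /\
    (forall N, bijective (eps N)) /\
    (forall (M N : umodule S) (f : mhom M N) x,
        f (eps M x) = eps N (Fm _ _ (Gm M N f) x)).

Definition finite_subgroup (G : groupType) (H : set G) : Prop :=
  H (gone G) /\ (forall x y, H x -> H y -> H (gmul x y)) /\
  (forall x, H x -> H (ginv x)) /\ finite_set H.

(* Only the values of
   [act] on elements of H matter. *)
Definition module_algebra (G : groupType) (H : set G) (A : algType CC)
  (act : G -> A -> A) : Prop :=
  (forall a, act (gone G) a = a) /\
  (forall h k, H h -> H k -> forall a, act (gmul h k) a = act h (act k a)) /\
  (forall h, H h -> forall (c : CC) (a b : A), act h (c *: a + b) = c *: act h a + act h b) /\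
  (forall h, H h -> forall a b : A, act h (a * b) = act h a * act h b) /\
  (forall h, H h -> act h 1 = 1).

Definition fin_supp (G : groupType) (A : zmodType) (f : G -> A) : Prop :=
  finite_set [set g | f g <> 0].

Definition CcH (G : groupType) (H : set G) (A : algType CC) (act : G -> A -> A)
  (F : G -> A) : Prop :=
  fin_supp F /\ (forall h g, H h -> act h (F g) = F (gmul h g)).

(* C_c(G,A)^{CH} # CG: an element sum_s F_s # s is encoded by
   Phi : G -> (G -> A) with Phi s = F_s (finitely many nonzero).
   Product: (F # s)(F' # t) = F (s -> F') # st, with (s -> F')(g) = F'(g s),
   so (Phi Psi)(u)(g) = sum_s Phi(s)(g) * Psi(s^-1 u)(g s). *)
Definition smashG (G : groupType) (H : set G) (A : algType CC)
  (act : G -> A -> A) : prering :=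
  @PreRing (G -> G -> A)
    (fun Phi Psi s g => Phi s g + Psi s g)
    (fun Phi Psi u g =>
       \sum_(s \in [set: G]) (Phi s g * Psi (gmul (ginv s) u) (gmul g s)))
    (fun Phi => finite_set [set s | exists g, Phi s g <> 0] /\
                forall s, CcH H act (Phi s)).

(* A # CH: an element sum_h a_h # h is encoded by x : G -> A vanishing
   outside H.  Product: (a # h)(b # k) = a (h -> b) # hk, so
   (x y)(u) = sum_{h in H} x(h) * (h -> y(h^-1 u)). *)
Definition smashH (G : groupType) (H : set G) (A : algType CC)
  (act : G -> A -> A) : prering :=
  @PreRing (G -> A)
    (fun x y g => x g + y g)
    (fun x y u => \sum_(h \in H) (x h * act h (y (gmul (ginv h) u))))
    (fun x => forall g, ~ H g -> x g = 0).

(* Main.v *)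
Require Import Defs.
From HB Require Import structures.
From mathcomp Require Import all_boot all_order all_algebra.
From mathcomp Require Import boolp classical_sets cardinality fsbigop.
From mathcomp Require Import Rstruct complex.
From mathcomp Require monoid.
From mathcomp Require Import finmap.
Set Implicit Arguments. Unset Strict Implicit. Unset Printing Implicit Defensive.
Import GRing.Theory.
Local Open Scope ring_scope.

Record zpred (V : zmodType) := ZPred { zp :> V -> Prop; zp0 : zp 0;
  zpN : forall x, zp x -> zp (- x); zpD : forall x y, zp x -> zp y -> zp (x + y) }.
Record subz (V : zmodType) (P : zpred V) := SubZ { szv : V; szp : P szv }.
Arguments SubZ {V P}.
HB.instance Definition _ V P := gen_eqMixin (@subz V P).
HB.instance Definition _ V P := gen_choiceMixin (@subz V P).

Lemma subz_eq V (P : zpred V) (x y : subz P) : szv x = szv y -> x = y.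
Proof. case: x y => x px [y py] /= exy; subst; congr SubZ; exact: Prop_irrelevance. Qed.

Section SZ.
Variables (V : zmodType) (P : zpred V).
Definition sz0 : subz P := SubZ 0 (zp0 P).
Definition szN (x : subz P) : subz P := SubZ (- szv x) (zpN (szp x)).
Definition szD (x y : subz P) : subz P := SubZ (szv x + szv y) (zpD (szp x) (szp y)).
Lemma szA : associative szD. Proof. by move=> x y z; apply: subz_eq; rewrite /= addrA. Qed.
Lemma szC : commutative szD. Proof. by move=> x y; apply: subz_eq; rewrite /= addrC. Qed.
Lemma sz0l : left_id sz0 szD. Proof. by move=> x; apply: subz_eq; rewrite /= add0r. Qed.
Lemma szNl : left_inverse sz0 szN szD. Proof. by move=> x; apply: subz_eq; rewrite /= addNr. Qed.
End SZ.
HB.instance Definition _ V P := GRing.isZmodule.Build (@subz V P) (@szA V P) (@szC V P) (@sz0l V P) (@szNl V P).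

Definition fz (G : Type) (N : zmodType) := G -> N.
HB.instance Definition _ G N := gen_eqMixin (@fz G N).
HB.instance Definition _ G N := gen_choiceMixin (@fz G N).
Section FZ.
Variables (G : Type) (N : zmodType).
Definition fz0 : fz G N := fun _ => 0.
Definition fzN (f : fz G N) : fz G N := fun x => - f x.
Definition fzD (f g : fz G N) : fz G N := fun x => f x + g x.
Lemma fzA : associative fzD. Proof. by move=> x y z; apply: funext => i; rewrite /fzD addrA. Qed.
Lemma fzC : commutative fzD. Proof. by move=> x y; apply: funext => i; rewrite /fzD addrC. Qed.
Lemma fz0l : left_id fz0 fzD. Proof. by move=> x; apply: funext => i; rewrite /fzD /fz0 add0r. Qed.
Lemma fzNl : left_inverse fz0 fzN fzD. Proof. by move=> x; apply: funext => i; rewrite /fzD /fzN /fz0 addNr. Qed.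
End FZ.
HB.instance Definition _ G N := GRing.isZmodule.Build (@fz G N) (@fzA G N) (@fzC G N) (@fz0l G N) (@fzNl G N).

Local Open Scope classical_set_scope.

Section Tools.
Variable G : groupType.

Lemma gA (x y z : G) : gmul x (gmul y z) = gmul (gmul x y) z.
Proof. exact: monoid.mulgA. Qed.
Lemma g1l (x : G) : gmul (gone G) x = x. Proof. exact: monoid.mul1g. Qed.
Lemma g1r (x : G) : gmul x (gone G) = x. Proof. exact: monoid.mulg1. Qed.
Lemma gVl (x : G) : gmul (ginv x) x = gone G. Proof. exact: monoid.mulVg. Qed.
Lemma gVr (x : G) : gmul x (ginv x) = gone G. Proof. exact: monoid.mulgV. Qed.
Lemma gVV (x : G) : ginv (ginv x) = x. Proof. exact: monoid.invgK. Qed.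
Lemma gVM (x y : G) : ginv (gmul x y) = gmul (ginv y) (ginv x). Proof. exact: monoid.invgM. Qed.
Lemma gV1 : ginv (gone G) = gone G. Proof. exact: monoid.invg1. Qed.
Lemma gKl (x y : G) : gmul (ginv x) (gmul x y) = y. Proof. by rewrite gA gVl g1l. Qed.
Lemma gKl' (x y : G) : gmul x (gmul (ginv x) y) = y. Proof. by rewrite gA gVr g1l. Qed.
Lemma gKr (x y : G) : gmul (gmul y x) (ginv x) = y. Proof. by rewrite -gA gVr g1r. Qed.
Lemma gKr' (x y : G) : gmul (gmul y (ginv x)) x = y. Proof. by rewrite -gA gVl g1r. Qed.
Lemma gmulI (x y z : G) : gmul x y = gmul x z -> y = z.
Proof. by move=> e; rewrite -(gKl x y) e gKl. Qed.
Lemma gmulIr (x y z : G) : gmul y x = gmul z x -> y = z.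
Proof. by move=> e; rewrite -(gKr x y) e gKr. Qed.
Lemma ginv_inj (x y : G) : ginv x = ginv y -> x = y.
Proof. by move=> e; rewrite -(gVV x) e gVV. Qed.

Definition sumG (V : zmodType) (F : G -> V) := \sum_(i \in [set: G]) F i.

Lemma sumG_fset (V : zmodType) (K : {fset G}) (F : G -> V) :
  (forall i, i \notin K -> F i = 0) -> sumG F = \sum_(i <- K) F i.
Proof. exact: fsbigTE. Qed.

Lemma sumG1 (V : zmodType) (a : G) (F : G -> V) :
  (forall i, i != a -> F i = 0) -> sumG F = F a.
Proof.
move=> h; rewrite (@sumG_fset _ [fset a]%fset) ?big_seq_fset1 // => i.
by rewrite inE => /h.
Qed.

Lemma sumG0 (V : zmodType) (F : G -> V) : (forall i, F i = 0) -> sumG F = 0.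
Proof. by move=> h; rewrite (@sumG_fset _ fset0) ?big_seq_fset0. Qed.

Lemma sumG_reindex (V : zmodType) (a : G) (F : G -> V) :
  sumG F = sumG (fun s => F (gmul a s)).
Proof.
rewrite /sumG (reindex_fsbigT (fun s => gmul a s)) //.
by exists (fun s => gmul (ginv a) s) => s; rewrite ?gKl ?gKl'.
Qed.

Lemma sumG_morph (V W : zmodType) (f : V -> W) (K : {fset G}) (F : G -> V) :
  f 0 = 0 -> (forall x y, f (x + y) = f x + f y) ->
  (forall i, i \notin K -> F i = 0) -> f (sumG F) = sumG (fun i => f (F i)).
Proof.
move=> f0 fD hK; rewrite (sumG_fset hK) (@sumG_fset _ K); last by move=> i /hK ->.
exact: (big_morph f fD f0).
Qed.

Lemma sumGD (V : zmodType) (K : {fset G}) (F F' : G -> V) :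
  (forall i, i \notin K -> F i = 0) -> (forall i, i \notin K -> F' i = 0) ->
  sumG (fun i => F i + F' i) = sumG F + sumG F'.
Proof.
move=> h h'; rewrite (sumG_fset h) (sumG_fset h') (@sumG_fset _ K) ?big_split //.
by move=> i iK; rewrite h ?h' ?addr0.
Qed.

Lemma sumG_exchange (V : zmodType) (K1 K2 : {fset G}) (F : G -> G -> V) :
  (forall i j, i \notin K1 -> F i j = 0) -> (forall i j, j \notin K2 -> F i j = 0) ->
  sumG (fun i => sumG (fun j => F i j)) = sumG (fun j => sumG (fun i => F i j)).
Proof.
move=> h1 h2.
rewrite (@sumG_fset _ K1); last by move=> i iK; apply: sumG0 => j; rewrite h1.
rewrite (@sumG_fset _ K2); last by move=> j jK; apply: sumG0 => i; rewrite h2.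
rewrite (eq_bigr (fun i => \sum_(j <- K2) F i j)); last by move=> i _; apply: sumG_fset => j /h2.
rewrite [RHS](eq_bigr (fun j => \sum_(i <- K1) F i j)); last by move=> j _; apply: sumG_fset => i /h1.
exact: exchange_big.
Qed.

Lemma eq_sumG (V : zmodType) (F F' : G -> V) : (forall i, F i = F' i) -> sumG F = sumG F'.
Proof. by move=> h; congr sumG; apply: funext. Qed.

End Tools.

Section ModGen.
Variables (P : prering) (z : pr_car P).
Hypotheses (mz : pr_mem P z) (zz : pr_add P z z = z)
  (madd : forall x y, pr_mem P x -> pr_mem P y -> pr_mem P (pr_add P x y)).
Variable M : lmodule P.

Lemma lm_act_z m : lm_act M z m = 0.
Proof.
have e := @lm_addD _ M _ _ mz mz m; rewrite zz in e.
by apply: (@addrI _ (lm_act M z m)); rewrite addr0 -e.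
Qed.

Lemma lm_act0 r : pr_mem P r -> lm_act M r 0 = 0.
Proof.
move=> mr; have e := @lm_actD _ M _ mr 0 0; rewrite addr0 in e.
by apply: (@addrI _ (lm_act M r 0)); rewrite addr0 -e.
Qed.

Lemma lm_actN r m : pr_mem P r -> lm_act M r (- m) = - lm_act M r m.
Proof.
move=> mr; apply: (@addrI _ (lm_act M r m)).
by rewrite -lm_actD // !subrr lm_act0.
Qed.

Lemma lm_act_sum r (I : Type) (s : seq I) (F : I -> M) : pr_mem P r ->
  lm_act M r (\sum_(i <- s) F i) = \sum_(i <- s) lm_act M r (F i).
Proof. by move=> mr; apply: (big_morph _ (@lm_actD _ M _ mr) (lm_act0 mr)). Qed.

Definition psum (I : Type) (s : seq I) (F : I -> pr_car P) :=
  foldr (fun i acc => pr_add P (F i) acc) z s.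

Lemma psum_mem (I : Type) (s : seq I) (F : I -> pr_car P) :
  (forall i, pr_mem P (F i)) -> pr_mem P (psum s F).
Proof. by move=> h; elim: s => //= i s ih; apply: madd. Qed.

Lemma lm_act_psum (I : Type) (s : seq I) (F : I -> pr_car P) m :
  (forall i, pr_mem P (F i)) ->
  lm_act M (psum s F) m = \sum_(i <- s) lm_act M (F i) m.
Proof.
move=> h; elim: s => /= [|i s ih]; first by rewrite big_nil lm_act_z.
by rewrite big_cons lm_addD ?ih //; apply: psum_mem.
Qed.

End ModGen.

Section MhomGen.
Variables (P : prering) (M N : lmodule P) (f : mhom M N).
Lemma mh0 : f 0 = 0.
Proof. by apply: (@addrI _ (f 0)); rewrite -mh_add !addr0. Qed.
Lemma mhN x : f (- x) = - f x.
Proof. by apply: (@addrI _ (f x)); rewrite -mh_add !subrr mh0. Qed.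
Lemma mh_sum (I : Type) (s : seq I) (F : I -> M) :
  f (\sum_(i <- s) F i) = \sum_(i <- s) f (F i).
Proof. exact: (big_morph _ (mh_add f) mh0). Qed.
End MhomGen.

Lemma szv_sum (V : zmodType) (P : zpred V) (I : Type) (s : seq I) (F : I -> subz P) :
  szv (\sum_(i <- s) F i) = \sum_(i <- s) szv (F i).
Proof. by apply: (big_morph (@szv V P)) => //. Qed.

Local Open Scope ring_scope. Local Open Scope classical_set_scope.

Section Main.
Variables (G : groupType) (H : set G) (A : algType CC) (act : G -> A -> A).
Hypothesis HH : finite_subgroup H.
Hypothesis MA : module_algebra H act.

Local Notation one := (gone G).
Definition inH (x : G) : bool := `[< H x >].
Lemma inHP x : reflect (H x) (inH x). Proof. exact: asboolP. Qed.

Lemma H1 : H one. Proof. by case: HH. Qed.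
Lemma HM x y : H x -> H y -> H (gmul x y). Proof. by case: HH => _ [+ _]; apply. Qed.
Lemma HV x : H x -> H (ginv x). Proof. by case: HH => _ [_ [+ _]]; apply. Qed.
Lemma Hfin : finite_set H. Proof. by case: HH => _ [_ [_]]. Qed.
Lemma HMl x y : H x -> H (gmul x y) = H y.
Proof.
move=> hx; apply: propext; split=> h; last exact: HM.
by rewrite -(gKl x y); apply: HM => //; apply: HV.
Qed.
Lemma HMr x y : H y -> H (gmul x y) = H x.
Proof.
move=> hy; apply: propext; split=> h; last exact: HM.
by rewrite -(gKr y x); apply: HM => //; apply: HV.
Qed.
Lemma HVE x : H (ginv x) = H x.
Proof. apply: propext; split=> h; last exact: HV. by rewrite -(gVV x); apply: HV. Qed.
Lemma inHMl x y : H x -> inH (gmul x y) = inH y.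
Proof. by move=> hx; rewrite /inH HMl. Qed.
Lemma inHMr x y : H y -> inH (gmul x y) = inH x.
Proof. by move=> hx; rewrite /inH HMr. Qed.
Lemma inHV x : inH (ginv x) = inH x. Proof. by rewrite /inH HVE. Qed.

Lemma act1 a : act one a = a. Proof. by case: MA. Qed.
Lemma actM h k a : H h -> H k -> act (gmul h k) a = act h (act k a).
Proof. by case: MA => _ [+ _] hh hk; apply. Qed.
Lemma actL h (c : CC) a b : H h -> act h (c *: a + b) = c *: act h a + act h b.
Proof. by case: MA => _ [_ [+ _]] hh; apply. Qed.
Lemma actMul h a b : H h -> act h (a * b) = act h a * act h b.
Proof. by case: MA => _ [_ [_ [+ _]]] hh; apply. Qed.
Lemma act_1 h : H h -> act h 1 = 1.
Proof. by case: MA => _ [_ [_ [_ +]]] hh; apply. Qed.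
Lemma actD h a b : H h -> act h (a + b) = act h a + act h b.
Proof. by move=> hh; have := @actL h 1 a b hh; rewrite !scale1r. Qed.
Lemma act0 h : H h -> act h 0 = 0.
Proof.
move=> hh; have e := actD 0 0 hh; rewrite addr0 in e.
by apply: (@addrI _ (act h 0)); rewrite addr0 -e.
Qed.
Lemma actZ h c a : H h -> act h (c *: a) = c *: act h a.
Proof. by move=> hh; rewrite -[c *: a]addr0 actL // act0 // addr0. Qed.
Lemma act_sum h (I : Type) (s : seq I) (F : I -> A) : H h ->
  act h (\sum_(i <- s) F i) = \sum_(i <- s) act h (F i).
Proof. by move=> hh; apply: (big_morph _ (fun a b => actD a b hh) (act0 hh)). Qed.

Let R := smashG H act.
Let S := smashH H act.

Lemma sumH_sumG (V : zmodType) (F : G -> V) :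
  \sum_(h \in H) F h = sumG (fun h => if inH h then F h else 0).
Proof.
rewrite fsbig_mkcond /sumG; apply: eq_fsbigr => x _.
rewrite /functions.patch; have -> // : (x \in H) = inH x.
by apply/idP/inHP; rewrite in_setE.
Qed.

Definition be (a : A) (k : G) : G -> A := fun v => if v == k then a else 0.
Definition dl k := be 1 k.
Definition al a := be a one.

Lemma mulSE x y u : pr_mul S x y u = \sum_(h \in H) (x h * act h (y (gmul (ginv h) u))).
Proof. by []. Qed.

Lemma mulS_be a b k j : H k -> H j ->
  pr_mul S (be a k) (be b j) = be (a * act k b) (gmul k j).
Proof.
move=> hk hj; apply: funext => u; rewrite mulSE sumH_sumG (sumG1 (a := k)).
  rewrite /inH; case: asboolP => // _; rewrite /be eqxx.
  have -> : (gmul (ginv k) u == j) = (u == gmul k j).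
    apply/eqP/eqP => [<-|->]; by rewrite ?gKl ?gKl'.
  by case: eqP => _; rewrite ?act0 ?mulr0.
by move=> i /negPf ik; rewrite /be ik mul0r; case: ifP.
Qed.


Lemma mulRE Phi Psi u g : pr_mul R Phi Psi u g =
  sumG (fun s => Phi s g * Psi (gmul (ginv s) u) (gmul g s)).
Proof. by []. Qed.

Definition fsup (V : zmodType) (f : G -> V) :=
  exists K : {fset G}, forall i, i \notin K -> f i = 0.

Lemma fin_fsup (V : zmodType) (f : G -> V) : finite_set [set i | f i <> 0] -> fsup f.
Proof.
move=> fin; exists (fset_set [set i | f i <> 0]) => i.
rewrite in_fset_set // => hn; apply: contra_notP (negP hn) => nz; exact: mem_set.
Qed.

Lemma fsup_fin (V : zmodType) (f : G -> V) : fsup f -> finite_set [set i | f i <> 0].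
Proof.
move=> [K hK]; apply: (@finite_subfset _ K) => i /= fi.
by apply: contra_notT fi => /hK.
Qed.

Lemma fsupD (V : zmodType) (f f' : G -> V) : fsup f -> fsup f' -> fsup (fun i => f i + f' i).
Proof.
move=> [K hK] [K' hK']; exists (K `|` K')%fset => i; rewrite inE negb_or => /andP[a b].
by rewrite hK ?hK' ?addr0.
Qed.

Definition inbox (Phi : G -> G -> A) (K : {fset G}) :=
  forall s g, (s \notin K) || (g \notin K) -> Phi s g = 0.

Lemma inboxS Phi K s g : inbox Phi K -> s \notin K -> Phi s g = 0.
Proof. by move=> h hs; apply: h; rewrite hs. Qed.
Lemma inboxG Phi K s g : inbox Phi K -> g \notin K -> Phi s g = 0.
Proof. by move=> h hs; apply: h; rewrite hs orbT. Qed.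
Lemma inbox_sub Phi K K' : inbox Phi K -> fsubset K K' -> inbox Phi K'.
Proof.
move=> h sub s g hsg; apply: h; move: hsg; apply: contraTT; rewrite !negb_or !negbK.
by move=> /andP[a b]; rewrite !(fsubsetP sub).
Qed.

Definition memR Phi := pr_mem R Phi.

Lemma memR_inv Phi s h g : memR Phi -> H h -> act h (Phi s g) = Phi s (gmul h g).
Proof. by move=> [_ +] hh => /(_ s) [_]; apply. Qed.

Lemma memR_box Phi : memR Phi -> exists K, inbox Phi K.
Proof.
move=> [fin cc].
have [K1 hK1] : exists K1 : {fset G}, forall s g, s \notin K1 -> Phi s g = 0.
  exists (fset_set [set s | exists g, Phi s g <> 0]) => s g.
  rewrite in_fset_set // => hn; apply: contra_notP (negP hn) => nz; apply: mem_set.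
  by exists g.
have gen : forall l : seq G, exists K2 : {fset G}, forall s g, s \in l -> g \notin K2 -> Phi s g = 0.
  elim => [|s0 l [K ih]]; first by exists fset0.
  have [K' hK'] := fin_fsup (proj1 (cc s0)).
  exists (K `|` K')%fset => s g; rewrite !inE negb_or => hs /andP[a b].
  case/orP: hs => [/eqP ->|hs]; first by rewrite hK'.
  exact: ih.
have [K2 hK2] := gen (enum_fset K1).
exists (K1 `|` K2)%fset => s g; rewrite !inE !negb_or.
case: (boolP (s \in K1)) => hs /=; last by rewrite hK1.
by move=> /andP[_ hg]; apply: hK2.
Qed.


Lemma memR_intro Phi K : inbox Phi K ->
  (forall s h g, H h -> act h (Phi s g) = Phi s (gmul h g)) -> memR Phi.
Proof.
move=> hK hinv; split.
  apply: (@finite_subfset _ K) => s /= [g]; apply: contra_notT => hs.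
  exact: inboxS _ hK hs.
move=> s; split; last by move=> h g hh; apply: hinv.
apply: (@finite_subfset _ K) => g /=; apply: contra_notT => hg.
exact: inboxG _ hK hg.
Qed.

Definition zR : G -> G -> A := fun _ _ => 0.
Lemma zR_mem : memR zR.
Proof. apply: (@memR_intro _ fset0) => // s h g hh; exact: act0. Qed.
Lemma zR_add : pr_add R zR zR = zR.
Proof. by apply: funext => u; apply: funext => g; rewrite /= addr0. Qed.
Lemma memR_add Phi Psi : memR Phi -> memR Psi -> memR (pr_add R Phi Psi).
Proof.
move=> mP mQ; have [K hK] := memR_box mP; have [K' hK'] := memR_box mQ.
apply: (@memR_intro _ (K `|` K')%fset).
  move=> s g; rewrite !inE !negb_or => hsg /=.
  rewrite (hK s g) ?(hK' s g) ?addr0 //.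
    by case/orP: hsg => /andP[a b]; rewrite ?a ?b ?orbT.
  by case/orP: hsg => /andP[a b]; rewrite ?a ?b ?orbT.
by move=> s h g hh /=; rewrite actD // !memR_inv.
Qed.

Definition memS x := pr_mem S x.
Definition zS : G -> A := fun _ => 0.
Lemma zS_mem : memS zS. Proof. by []. Qed.
Lemma zS_add : pr_add S zS zS = zS.
Proof. by apply: funext => u; rewrite /= addr0. Qed.
Lemma memS_add x y : memS x -> memS y -> memS (pr_add S x y).
Proof. by move=> mx my g hg /=; rewrite mx ?my ?addr0. Qed.

Lemma fHE s : (s \in fset_set H) = inH s.
Proof. by rewrite in_fset_set; [apply/idP/inHP; rewrite in_setE | exact: Hfin]. Qed.

Lemma be_mem a k : H k -> memS (be a k).
Proof. by move=> hk g hg; rewrite /be; case: eqP => // e; rewrite e in hg. Qed.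

Definition io (x : G -> A) : G -> G -> A :=
  fun u g => if inH u && inH g then act g (x u) else 0.
Definition e := io (dl one).

Lemma io_mem x : memR (io x).
Proof.
apply: (@memR_intro _ (fset_set H)).
  by move=> s g; rewrite !fHE /io; case: (inH s); case: (inH g).
move=> s h g hh; rewrite /io inHMl //; case hsg: (inH s && inH g); last exact: act0.
by case/andP: hsg => _ /inHP hg; rewrite actM.
Qed.

Lemma io_add x y : io (pr_add S x y) = pr_add R (io x) (io y).
Proof.
apply: funext => u; apply: funext => g; rewrite /io /=.
case: ifP => [/andP[_ /inHP hg]|_]; [exact: actD | by rewrite addr0].
Qed.

Lemma eE u g : e u g = if (u == one) && inH g then 1 else 0.
Proof.
rewrite /e /io /dl /be; case: eqP => [->|_]; rewrite ?andbF ?andbT.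
  have -> : inH one by apply/inHP; exact: H1.
  by case: ifP => // /inHP; exact: act_1.
by case: ifP => // /andP[_ /inHP hg]; exact: act0.
Qed.

Lemma sumG_fH (V : zmodType) (F : G -> V) :
  (forall s, ~~ inH s -> F s = 0) -> sumG F = \sum_(s <- fset_set H) F s.
Proof. by move=> h; apply: sumG_fset => i; rewrite fHE; apply: h. Qed.

Lemma io_mul x y : memS x -> memS y -> io (pr_mul S x y) = pr_mul R (io x) (io y).
Proof.
move=> mx my; apply: funext => u; apply: funext => g; rewrite mulRE.
case hg: (inH g); last first.
  by rewrite /io hg andbF; symmetry; apply: sumG0 => s; rewrite ?hg ?andbF mul0r.
case hu: (inH u); last first.
  rewrite /io hu /=; symmetry; apply: sumG0 => s; rewrite /io.
  case hs: (inH s); last by rewrite mul0r.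
  have hsH : H s by apply/inHP.
  by rewrite inHMl ?hu ?andFb ?mulr0 //; apply: HV.
rewrite /io hu hg /= sumH_sumG (@sumG_morph _ _ _ _ (fset_set H)).
- apply: eq_sumG => s; case hs: (inH s); rewrite /= ?mul0r ?act0 //; last exact/inHP.
  have hsH : H s by apply/inHP.
  rewrite inHMl ?hu /=; last by rewrite HVE.
  rewrite inHMr // hg actMul; last exact/inHP.
  by rewrite actM //; apply/inHP.
- exact/act0/inHP.
- by move=> a b; apply/actD/inHP.
- by move=> i; rewrite fHE => /negbTE ->.
Qed.

Lemma e_io x : pr_mul R e (io x) = io x.
Proof.
apply: funext => u; apply: funext => g; rewrite mulRE (sumG1 (a := one)).
  rewrite eE eqxx gV1 g1l g1r /=; case hg: (inH g); first by rewrite mul1r.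
  by rewrite mul0r /io hg andbF.
by move=> s /negbTE hs; rewrite eE hs mul0r.
Qed.


Lemma gV_eq u h : (gmul (ginv h) u == one) = (u == h).
Proof.
apply/eqP/eqP => [e1|->]; last exact: gVl.
by rewrite -(gKl' h u) e1 g1r.
Qed.

Lemma dl_r x : memS x -> pr_mul S x (dl one) = x.
Proof.
move=> mx; apply: funext => u; rewrite mulSE sumH_sumG.
case hu: (inH u).
  rewrite (sumG1 (a := u)) ?hu.
    by rewrite /dl /be gV_eq eqxx act_1 ?mulr1 //; apply/inHP.
  move=> i ne; case: ifP => // /inHP hi.
  by rewrite /dl /be gV_eq eq_sym (negbTE ne) act0 ?mulr0.
rewrite mx; last by apply/inHP; rewrite hu.
apply: sumG0 => i; case: ifP => // /inHP hi.
rewrite /dl /be gV_eq; case: eqP => [e1|_]; last by rewrite act0 ?mulr0.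
by move: hu; rewrite e1; move/inHP.
Qed.

Lemma dl_l x : memS x -> pr_mul S (dl one) x = x.
Proof.
move=> mx; apply: funext => u; rewrite mulSE sumH_sumG (sumG1 (a := one)).
  have -> : inH one by apply/inHP; exact: H1.
  by rewrite /dl /be eqxx mul1r gV1 g1l act1.
by move=> i /negbTE ne; rewrite /dl /be ne mul0r; case: ifP.
Qed.

Lemma local_units_S : has_local_units S.
Proof.
move=> T hT; exists (dl one); split; first by apply: be_mem; exact: H1.
split; first by apply: dl_r; apply: be_mem; exact: H1.
by move=> t tT; split; [apply: dl_r | apply: dl_l]; apply: hT.
Qed.

Definition HX (X : {fset G}) := [fset gmul h x | h in fset_set H, x in X]%fset.

Lemma HX_in X h x : H h -> x \in X -> gmul h x \in HX X.
Proof. by move=> hh hx; apply/imfset2P; exists h; rewrite ?fHE //; [apply/inHP | exists x]. Qed.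

Lemma HX_sub X x : x \in X -> x \in HX X.
Proof. by move=> hx; rewrite -[x]g1l; apply: HX_in => //; exact: H1. Qed.

Lemma HX_inv X h g : H h -> (gmul h g \in HX X) = (g \in HX X).
Proof.
move=> hh; apply/imfset2P/imfset2P => -[h' hh' [x hx ex]]; rewrite fHE in hh'.
  exists (gmul (ginv h) h'); first by rewrite fHE inHMl //; apply: HV.
  by exists x => //; rewrite -gA -ex gKl.
exists (gmul h h'); first by rewrite fHE inHMl.
by exists x => //; rewrite ex gA.
Qed.

Definition Ecut (X : {fset G}) : G -> G -> A :=
  fun u g => if (u == one) && (g \in HX X) then 1 else 0.

Lemma Ecut_mem X : memR (Ecut X).
Proof.
apply: (@memR_intro _ ([fset one] `|` HX X)%fset).
  move=> s g; rewrite /Ecut !inE !negb_or.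
  by case: eqP => //= _; case: (g \in HX X); rewrite ?andbF.
move=> s h g hh; rewrite /Ecut HX_inv //; case: ifP => _; [exact: act_1 | exact: act0].
Qed.

Lemma Ecut_l X Phi : (forall u g, Phi u g != 0 -> g \in HX X) ->
  pr_mul R (Ecut X) Phi = Phi.
Proof.
move=> hP; apply: funext => u; apply: funext => g; rewrite mulRE (sumG1 (a := one)).
  rewrite /Ecut eqxx gV1 g1l g1r /=; case: ifP => hg; first by rewrite mul1r.
  by rewrite mul0r; case: (eqVneq (Phi u g) 0) => // /hP; rewrite hg.
by move=> s /negbTE ne; rewrite /Ecut ne mul0r.
Qed.

Lemma Ecut_r X Phi : (forall u g, Phi u g != 0 -> gmul g u \in HX X) ->
  pr_mul R Phi (Ecut X) = Phi.
Proof.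
move=> hP; apply: funext => u; apply: funext => g; rewrite mulRE (sumG1 (a := u)).
  rewrite /Ecut gVl eqxx /=; case: ifP => hg; first by rewrite mulr1.
  by rewrite mulr0; case: (eqVneq (Phi u g) 0) => // /hP; rewrite hg.
by move=> s ne; rewrite /Ecut gV_eq eq_sym (negbTE ne) mulr0.
Qed.

Lemma fset_of_seq (T : seq (G -> G -> A)) : (forall t, List.In t T -> memR t) ->
  exists K, forall t, List.In t T -> inbox t K.
Proof.
elim: T => [|t T ih] hT; first by exists fset0.
have [K hK] := ih (fun t' h => hT t' (or_intror h)).
have [K' hK'] := memR_box (hT t (or_introl erefl)).
exists (K `|` K')%fset => t' [<-|/hK h].
  by apply: inbox_sub hK' _; apply/fsubsetP => x; rewrite inE orbC => ->.
by apply: inbox_sub h _; apply/fsubsetP => x; rewrite inE => ->.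
Qed.

Lemma inbox_nz Phi K u g : inbox Phi K -> Phi u g != 0 -> (u \in K) && (g \in K).
Proof.
move=> hK; apply: contraNT; rewrite negb_and => hh; apply/eqP; exact: hK.
Qed.

Lemma local_units_R : has_local_units R.
Proof.
move=> T hT; have [K hK] := fset_of_seq hT.
pose X := (K `|` [fset gmul a b | a in K, b in K])%fset.
exists (Ecut X); split; first exact: Ecut_mem.
split.
  apply: Ecut_l => u g; rewrite /Ecut; case: ifP => [/andP[_ ->]//|]; by rewrite eqxx.
move=> t tT; split.
  apply: Ecut_r => u g /(inbox_nz (hK t tT)) /andP[hu hg]; apply: HX_sub.
  by rewrite inE; apply/orP; right; apply/imfset2P; exists g => //; exists u.
apply: Ecut_l => u g /(inbox_nz (hK t tT)) /andP[hu hg]; apply: HX_sub.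
by rewrite inE hg.
Qed.


Lemma e_mem : memR e. Proof. exact: io_mem. Qed.

Section FFdef.
Variable M : umodule R.

Definition PeZ : zpred M.
refine (@ZPred M (fun m => lm_act M e m = m) _ _ _).
- exact: (lm_act0 _ e_mem).
- by move=> x hx; rewrite (lm_actN _ e_mem) hx.
- by move=> x y hx hy; rewrite lm_actD ?hx ?hy //; exact: e_mem.
Defined.

Lemma actF_proof (x : pr_car S) (m : subz PeZ) :
  lm_act M e (lm_act M (io x) (szv m)) = lm_act M (io x) (szv m).
Proof. by rewrite -lm_mulA ?e_io //; [exact: e_mem | exact: io_mem]. Qed.

Definition actF (x : pr_car S) (m : subz PeZ) : subz PeZ :=
  @SubZ M PeZ (lm_act M (io x) (szv m)) (actF_proof x m).

Lemma actF_D x : pr_mem S x -> forall m n : subz PeZ, actF x (m + n) = actF x m + actF x n.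
Proof. by move=> _ m n; apply: subz_eq; rewrite /= lm_actD //; exact: io_mem. Qed.

Lemma actF_addD x y : pr_mem S x -> pr_mem S y -> forall m : subz PeZ,
  actF (pr_add S x y) m = actF x m + actF y m.
Proof.
by move=> _ _ m; apply: subz_eq; rewrite /= io_add lm_addD //; exact: io_mem.
Qed.

Lemma actF_mulA x y : pr_mem S x -> pr_mem S y -> forall m : subz PeZ,
  actF (pr_mul S x y) m = actF x (actF y m).
Proof.
by move=> mx my m; apply: subz_eq; rewrite /= io_mul // lm_mulA //; exact: io_mem.
Qed.

Definition FFl : lmodule S := @LModule S (subz PeZ) actF actF_D actF_addD actF_mulA.

Lemma FF_unital : unital_module FFl.
Proof.
move=> m; exists [:: (dl one, m)]; split.
  by move=> p [<-|[]]; apply: be_mem; exact: H1.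
rewrite big_cons big_nil addr0 /=; apply: subz_eq => /=.
by rewrite -[LHS](szp m).
Qed.

Definition FF : umodule S := UModule FF_unital.
End FFdef.

Section FmDef.
Variables (M N : umodule R) (f : mhom M N).
Lemma Fm_proof (m : subz (PeZ M)) : lm_act N e (f (szv m)) = f (szv m).
Proof. by rewrite -mh_act ?(szp m) //; exact: e_mem. Qed.
Definition Fmf (m : FF M) : FF N := @SubZ N (PeZ N) (f (szv m)) (Fm_proof m).
Lemma Fm_add x y : Fmf (x + y) = Fmf x + Fmf y.
Proof. by apply: subz_eq; rewrite /= mh_add. Qed.
Lemma Fm_act r : pr_mem S r -> forall x, Fmf (lm_act (FF M) r x) = lm_act (FF N) r (Fmf x).
Proof. by move=> _ x; apply: subz_eq; rewrite /= mh_act //; exact: io_mem. Qed.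
Definition Fm : mhom (FF M) (FF N) := MHom Fm_add Fm_act.
End FmDef.

Lemma Fm_functor : is_functor Fm.
Proof.
split.
  by move=> M f hf y; apply: subz_eq; rewrite /= hf.
by move=> M N P f g h hfg y; apply: subz_eq; rewrite /= hfg.
Qed.


Lemma memR_mul Phi Psi : memR Phi -> memR Psi -> memR (pr_mul R Phi Psi).
Proof.
move=> mP mQ; have [K hK] := memR_box mP; have [K' hK'] := memR_box mQ.
pose KK := [fset gmul a b | a in K, b in K']%fset.
apply: (@memR_intro _ (K `|` KK)%fset).
  move=> s g; rewrite !inE !negb_or => hsg; rewrite mulRE; apply: sumG0 => w.
  case: (boolP (g \in K)) => hg; last by rewrite (inboxG _ hK hg) mul0r.
  case: (boolP (w \in K)) => hw; last by rewrite (inboxS _ hK hw) mul0r.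
  rewrite (inboxS _ hK'); first by rewrite mulr0.
  have hs : s \notin KK by case/orP: hsg => /andP[]; rewrite ?hg.
  apply: contra hs => hv; apply/imfset2P; exists w => //; exists (gmul (ginv w) s) => //.
  by rewrite gKl'.
move=> s h g hh; rewrite !mulRE (@sumG_morph _ _ _ (act h) K); first last.
- by move=> w hw; rewrite (inboxS _ hK hw) mul0r.
- by move=> a b; rewrite actD.
- exact: act0.
apply: eq_sumG => w; rewrite actMul // !memR_inv //; by rewrite gA.
Qed.

Lemma sum_In (V : zmodType) (I : Type) (l : seq I) (F F' : I -> V) :
  (forall p, List.In p l -> F p = F' p) -> \sum_(p <- l) F p = \sum_(p <- l) F' p.
Proof.
elim: l => [|p l ih] h; first by rewrite !big_nil.
by rewrite !big_cons h /=; [rewrite ih // => q hq; apply: h; right | left].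
Qed.

Lemma al0 : al 0 = zS. Proof. by apply: funext => v; rewrite /al /be; case: ifP. Qed.
Lemma alD a b : al (a + b) = pr_add S (al a) (al b).
Proof. by apply: funext => v; rewrite /al /be /=; case: ifP; rewrite ?addr0. Qed.
Lemma al_mem a : memS (al a). Proof. by apply: be_mem; exact: H1. Qed.
Lemma dl_mem k : H k -> memS (dl k). Proof. exact: be_mem. Qed.
Lemma al_mul a b : pr_mul S (al a) (al b) = al (a * b).
Proof. by rewrite /al mulS_be ?act1 ?g1l //; exact: H1. Qed.

Lemma actS_z (N : lmodule S) n : lm_act N zS n = 0.
Proof. exact: (lm_act_z zS_mem zS_add). Qed.
Lemma actS0 (N : lmodule S) x : memS x -> lm_act N x 0 = 0.
Proof. exact: lm_act0. Qed.
Lemma al0_act (N : lmodule S) n : lm_act N (al 0) n = 0.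
Proof. by rewrite al0 actS_z. Qed.

Lemma unitN (N : umodule S) (n : N) : lm_act N (dl one) n = n.
Proof.
have [l [hl ->]] := um_unital n.
rewrite (lm_act_sum _ _ (dl_mem H1)); apply: sum_In => p pl.
rewrite -lm_mulA ?dl_l //; [exact: hl | exact: dl_mem H1 | exact: hl].
Qed.

Lemma al_sum (I : Type) (s : seq I) (c : I -> A) :
  al (\sum_(i <- s) c i) = psum (P := S) zS s (fun i => al (c i)).
Proof.
elim: s => /= [|i s ih]; first by rewrite big_nil al0.
by rewrite big_cons alD ih.
Qed.

Lemma act_al_sum (N : lmodule S) (I : Type) (s : seq I) (c : I -> A) n :
  lm_act N (al (\sum_(i <- s) c i)) n = \sum_(i <- s) lm_act N (al (c i)) n.
Proof.
by rewrite al_sum (lm_act_psum zS_mem zS_add memS_add) // => i; exact: al_mem.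
Qed.

Lemma fzDE (V : zmodType) (f g : fz G V) x : (f + g) x = f x + g x. Proof. by []. Qed.
Lemma fzNE (V : zmodType) (f : fz G V) x : (- f) x = - f x. Proof. by []. Qed.
Lemma fz0E (V : zmodType) x : (0 : fz G V) x = 0. Proof. by []. Qed.

Section GGdef.
Variable N : umodule S.

Definition PN (xi : fz G N) : Prop :=
  fsup xi /\ forall s h, H h -> xi (gmul s h) = lm_act N (dl (ginv h)) (xi s).

Definition PNZ : zpred (fz G N).
refine (@ZPred (fz G N) PN _ _ _).
- split; first by exists fset0.
  by move=> s h hh; rewrite /= actS0 //; apply/dl_mem/HV.
- move=> x [[K hK] hx]; split.
    by exists K => i /hK hxi; change (- x i = 0); rewrite hxi oppr0.
  move=> s h hh; change (- x (gmul s h) = lm_act N (dl (ginv h)) (- x s)).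
  by rewrite hx // lm_actN //; apply/dl_mem/HV.
- move=> x y [fx hx] [fy hy]; split; first exact: fsupD.
  move=> s h hh; change (x (gmul s h) + y (gmul s h) = lm_act N (dl (ginv h)) (x s + y s)).
  by rewrite hx // hy // lm_actD //; apply/dl_mem/HV.
Defined.

Definition actG (Phi : G -> G -> A) (xi : G -> N) : G -> N :=
  fun t => sumG (fun u => lm_act N (al (Phi u (ginv t))) (xi (gmul (ginv u) t))).

Lemma actG_termS Phi K (xi : G -> N) t u : inbox Phi K -> u \notin K ->
  lm_act N (al (Phi u (ginv t))) (xi (gmul (ginv u) t)) = 0.
Proof. by move=> hK hu; rewrite (inboxS _ hK hu) al0_act. Qed.

Lemma actG_sumK Phi K (xi : G -> N) t : inbox Phi K ->
  actG Phi xi t = \sum_(u <- K) lm_act N (al (Phi u (ginv t))) (xi (gmul (ginv u) t)).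
Proof. by move=> hK; apply: sumG_fset => u hu; apply: actG_termS hK hu. Qed.

Lemma ginv_fset (K : {fset G}) t : ginv t \notin K -> t \notin [fset ginv x | x in K]%fset.
Proof.
apply: contra => /imfsetP [x hx ->]; by rewrite gVV.
Qed.

Lemma actG_P Phi xi : memR Phi -> PN xi -> PN (actG Phi xi).
Proof.
move=> mP [fx hx]; have [K hK] := memR_box mP; split.
  exists [fset ginv x | x in K]%fset => t ht; apply: sumG0 => u.
  rewrite (inboxG _ hK) ?al0_act //; apply: contra ht => h.
  by apply/imfsetP; exists (ginv t); rewrite ?gVV.
move=> t h hh; rewrite /actG.
rewrite (@sumG_morph _ _ _ _ K); first last.
- by move=> u hu; rewrite (inboxS _ hK hu) al0_act.
- by move=> a b; rewrite lm_actD //; apply/dl_mem/HV.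
- by apply: actS0; apply/dl_mem/HV.
apply: eq_sumG => u.
rewrite gA hx // gVM -(memR_inv _ _ mP); last exact: HV.
rewrite -!lm_mulA; try (apply/dl_mem/HV; done); try exact: al_mem.
congr (lm_act N _ _); rewrite /al /dl !mulS_be ?act1 ?mulr1 ?mul1r ?g1l ?g1r //;
  try exact: H1; exact: HV.
Qed.

Definition actGG (Phi : pr_car R) (xi : subz PNZ) : subz PNZ :=
  match pselect (memR Phi) with
  | left mP => @SubZ _ PNZ (actG Phi (szv xi)) (actG_P mP (szp xi))
  | right _ => 0
  end.

Lemma actGG_val Phi xi : memR Phi -> szv (actGG Phi xi) = actG Phi (szv xi).
Proof. by rewrite /actGG; case: pselect. Qed.

Lemma actGG_D Phi : pr_mem R Phi -> forall m n : subz PNZ,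
  actGG Phi (m + n) = actGG Phi m + actGG Phi n.
Proof.
move=> mP m n; apply: subz_eq; rewrite /= !actGG_val //=.
have [K hK] := memR_box mP; apply: funext => t; rewrite !fzDE /actG.
rewrite -(@sumGD _ _ K); first last.
- by move=> u hu; apply: actG_termS hK hu.
- by move=> u hu; apply: actG_termS hK hu.
by apply: eq_sumG => u; rewrite lm_actD //; exact: al_mem.
Qed.

Lemma actGG_addD Phi Psi : pr_mem R Phi -> pr_mem R Psi -> forall m : subz PNZ,
  actGG (pr_add R Phi Psi) m = actGG Phi m + actGG Psi m.
Proof.
move=> mP mQ m; apply: subz_eq; rewrite /= !actGG_val //=; last exact: memR_add.
have [K hK] := memR_box mP; have [K' hK'] := memR_box mQ.
apply: funext => t; rewrite !fzDE /actG.
rewrite -(@sumGD _ _ (K `|` K')%fset); first last.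
- by move=> u; rewrite inE negb_or => /andP[_ hu]; apply: actG_termS hK' hu.
- by move=> u; rewrite inE negb_or => /andP[hu _]; apply: actG_termS hK hu.
by apply: eq_sumG => u; rewrite /= alD lm_addD //; exact: al_mem.
Qed.

Lemma actG_mulA Phi Psi (xi : G -> N) : memR Phi -> memR Psi ->
  actG (pr_mul R Phi Psi) xi = actG Phi (actG Psi xi).
Proof.
move=> mP mQ; have [K hK] := memR_box mP; have [K' hK'] := memR_box mQ.
apply: funext => t.
pose T s u := lm_act N (al (Phi s (ginv t) * Psi (gmul (ginv s) u) (gmul (ginv t) s)))
  (xi (gmul (ginv u) t)).
have T0s s u : s \notin K -> T s u = 0 by move=> hs; rewrite /T (inboxS _ hK hs) mul0r al0_act.
transitivity (sumG (fun u => sumG (fun s => T s u))).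
  rewrite /actG; apply: eq_sumG => u; rewrite mulRE (@sumG_fset _ _ K); last first.
    by move=> s hs; rewrite (inboxS _ hK hs) mul0r.
  rewrite act_al_sum; symmetry; apply: sumG_fset => s hs; exact: T0s.
transitivity (sumG (fun s => sumG (fun u => T s u))); last first.
  rewrite /actG; apply: eq_sumG => s.
  rewrite (@sumG_morph _ _ _ (lm_act N (al (Phi s (ginv t)))) K'); first last.
  - by move=> v hv; rewrite (inboxS _ hK' hv) al0_act.
  - by move=> a b; rewrite lm_actD //; exact: al_mem.
  - exact/actS0/al_mem.
  rewrite [RHS](sumG_reindex (ginv s)); apply: eq_sumG => u.
  rewrite -lm_mulA ?al_mul; try exact: al_mem.
  rewrite /T !gVM !gVV; congr (lm_act N (al (_ * _)) (xi _)).
  by rewrite -gA gKl'.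
pose KK := [fset gmul a b | a in K, b in K']%fset.
apply: (@sumG_exchange _ _ KK K (fun u s => T s u)); last by move=> u s hs; exact: T0s.
move=> u s hu; case: (boolP (s \in K)) => hs; last exact: T0s.
rewrite /T (inboxS _ hK'); first by rewrite mulr0 al0_act.
apply: contra hu => hv; apply/imfset2P; exists s => //; exists (gmul (ginv s) u) => //.
by rewrite gKl'.
Qed.

Definition GGl : lmodule R.
refine (@LModule R (subz PNZ) actGG (@actGG_D) (@actGG_addD) _).
move=> Phi Psi mP mQ m; apply: subz_eq.
etransitivity; first exact: (actGG_val m (memR_mul mP mQ)).
etransitivity; last exact: (esym (actGG_val _ mP)).
by rewrite actG_mulA // actGG_val.
Defined.

Lemma GG_unital : unital_module GGl.
Proof.
move=> xi; have [[Kx hKx] _] := szp xi.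
pose X := [fset ginv t | t in Kx]%fset.
exists [:: (Ecut X, xi)]; split; first by move=> p [<-|[]]; exact: Ecut_mem.
rewrite big_cons big_nil addr0 /=; apply: subz_eq; symmetry.
etransitivity; first exact: (actGG_val xi (Ecut_mem X)).
apply: funext => t; rewrite /actG (sumG1 (a := one)); last first.
  by move=> u /negbTE ne; rewrite /Ecut ne /= al0_act.
rewrite /Ecut eqxx /= gV1 g1l; case: ifP => hX; first exact: unitN.
rewrite al0_act; case: (boolP (t \in Kx)) => ht; last by rewrite hKx.
by move: hX; rewrite HX_sub //; apply/imfsetP; exists t.
Qed.

Definition GG : umodule R := UModule GG_unital.
End GGdef.

Section GmDef.
Variables (N N' : umodule S) (f : mhom N N').
Lemma Gm_proof (xi : subz (PNZ N)) : PN (fun t => f (szv xi t)).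
Proof.
have [[K hK] hx] := szp xi; split; first by exists K => i /hK ->; exact: mh0.
by move=> s h hh; rewrite hx // mh_act //; apply/dl_mem/HV.
Qed.
Definition Gmf (xi : GG N) : GG N' := @SubZ _ (PNZ N') (fun t => f (szv xi t)) (Gm_proof xi).
Lemma Gm_add x y : Gmf (x + y) = Gmf x + Gmf y.
Proof. by apply: subz_eq; apply: funext => t; rewrite /= !fzDE mh_add. Qed.
Lemma Gm_act r : pr_mem R r -> forall x, Gmf (lm_act (GG N) r x) = lm_act (GG N') r (Gmf x).
Proof.
move=> mr x; apply: subz_eq.
etransitivity; last exact: (esym (actGG_val _ mr)).
apply: funext => t /=; rewrite (actGG_val _ mr) /actG.
have [K hK] := memR_box mr.
rewrite (@sumG_morph _ _ _ f K); first last.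
- by move=> u hu; rewrite (inboxS _ hK hu) al0_act.
- exact: mh_add.
- exact: mh0.
by apply: eq_sumG => u; rewrite mh_act //; exact: al_mem.
Qed.
Definition Gm : mhom (GG N) (GG N') := MHom Gm_add Gm_act.
End GmDef.

Lemma Gm_functor : is_functor Gm.
Proof.
split.
  by move=> M f hf y; apply: subz_eq; apply: funext => t /=; rewrite hf.
by move=> M N P f g h hfg y; apply: subz_eq; apply: funext => t /=; rewrite hfg.
Qed.


Definition nH := size (enum_fset (fset_set H)).

Lemma count_coset (X : {fset G}) a : (forall h, H h -> gmul a h \in X) ->
  count (fun t => inH (gmul (ginv a) t)) X = nH.
Proof.
move=> hX; rewrite -size_filter /nH -(size_map (gmul a) (enum_fset (fset_set H))).
apply: perm_size; apply: uniq_perm.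
- by apply: filter_uniq; exact: fset_uniq.
- by rewrite map_inj_uniq ?fset_uniq // => x y /gmulI.
move=> t; rewrite mem_filter; apply/andP/mapP.
  move=> [hp _]; exists (gmul (ginv a) t); first by rewrite fHE.
  by rewrite gKl'.
move=> [h hh ->]; rewrite fHE in hh; rewrite gKl hh; split => //.
by apply: hX; apply/inHP.
Qed.

Lemma sum_if_const (V : zmodType) (X : seq G) (P : pred G) (y : V) :
  \sum_(t <- X) (if P t then y else 0) = y *+ count P X.
Proof.
elim: X => [|t X ih]; first by rewrite big_nil.
by rewrite big_cons ih /=; case: (P t); rewrite ?add0r // mulrS.
Qed.

Lemma nH_gt0 : (0 < nH)%N.
Proof.
rewrite /nH; case e: (enum_fset (fset_set H)) => //.
have : one \in fset_set H by rewrite fHE; apply/inHP; exact: H1.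
by rewrite -[_ \in _]/(one \in enum_fset (fset_set H)) e.
Qed.

Definition cH : CC := (nH%:R)^-1.

Lemma cH_nH : cH *+ nH = 1.
Proof.
rewrite /cH -(mulr_natr ((nH%:R : CC)^-1)) mulVf //.
have : (nH%:R : complex Rdefinitions.R) != 0 by rewrite Num.Theory.pnatr_eq0 -lt0n nH_gt0.
by [].
Qed.

Lemma cH1 : (cH *: (1 : A)) *+ nH = 1.
Proof. by rewrite scalerMnl cH_nH scale1r. Qed.


Lemma ind_mem k (p : pred G) (a : A) (K : {fset G}) :
  (forall g, p g -> g \in K) -> (forall h g, H h -> p (gmul h g) = p g) ->
  (forall h, H h -> act h a = a) ->
  memR (fun u g => if (u == k) && p g then a else 0).
Proof.
move=> pK pinv ainv; apply: (@memR_intro _ (k |` K)%fset).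
  move=> s g; rewrite !inE !negb_or => hsg.
  case: (eqVneq s k) => [esk|ne] //=; case pg: (p g) => //.
  by move: hsg; rewrite esk eqxx (pK _ pg) !andbF.
move=> s h g hh; rewrite pinv //; case: ifP => _; [exact: ainv | exact: act0].
Qed.

Lemma c1_inv h : H h -> act h (cH *: (1 : A)) = cH *: 1.
Proof. by move=> hh; rewrite actZ // act_1. Qed.

Definition gp t : G -> G -> A :=
  fun u g => if (u == t) && inH (gmul g t) then cH *: (1 : A) else 0.
Definition rt t : G -> G -> A := fun u g => if (u == ginv t) && inH g then 1 else 0.
Definition Ec : G -> G -> A := fun u g => if (u == one) && inH g then cH *: (1 : A) else 0.
Definition Wk k : G -> G -> A := fun u g => if (u == k) && inH g then cH *: (1 : A) else 0.

Lemma gp_mem t : memR (gp t).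
Proof.
apply: (@ind_mem _ _ _ [fset gmul h (ginv t) | h in fset_set H]%fset).
- move=> g hg; apply/imfsetP; exists (gmul g t); first by rewrite fHE.
  by rewrite gKr.
- by move=> h g hh; rewrite -gA inHMl.
- exact: c1_inv.
Qed.

Lemma rt_mem t : memR (rt t).
Proof.
apply: (@ind_mem _ _ _ (fset_set H)).
- by move=> g; rewrite fHE.
- by move=> h g hh; rewrite inHMl.
- exact: act_1.
Qed.

Lemma Wk_mem k : memR (Wk k).
Proof.
apply: (@ind_mem _ _ _ (fset_set H)).
- by move=> g; rewrite fHE.
- by move=> h g hh; rewrite inHMl.
- exact: c1_inv.
Qed.

Lemma Ec_mem : memR Ec. Proof. exact: Wk_mem. Qed.

Lemma inHW x : inH x -> H x. Proof. by move/inHP. Qed.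

Lemma gp_io Phi u t : memR Phi ->
  pr_mul R (gp t) (io (al (Phi u (ginv t)))) =
  fun v g => if (v == t) && inH (gmul g t) then cH *: Phi u g else 0.
Proof.
move=> mP; apply: funext => v; apply: funext => g; rewrite mulRE (sumG1 (a := t)); last first.
  by move=> w /negbTE ne; rewrite /gp ne mul0r.
rewrite /gp eqxx /=; case hg: (inH (gmul g t)); last by rewrite mul0r andbF.
rewrite andbT /io /al /be gV_eq hg andbT.
case: (eqVneq v t) => [->|ne] /=.
  rewrite gVl (_ : inH one = true); last by apply/inHP; exact: H1.
  rewrite (memR_inv _ _ mP (inHW hg)) gKr.
  by rewrite -scalerAl mul1r.
by case: ifP => _; rewrite ?act0 ?mulr0 //; exact: inHW.
Qed.

Lemma Phi_gp Phi s : pr_mul R Phi (gp s) =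
  fun v g => if inH (gmul g v) then cH *: Phi (gmul v (ginv s)) g else 0.
Proof.
apply: funext => v; apply: funext => g; rewrite mulRE (sumG1 (a := gmul v (ginv s))); last first.
  move=> w ne; rewrite /gp; case: eqP => [e1|_]; last by rewrite mulr0.
  by move: ne; rewrite -e1 gVM gVV gKl' eqxx.
rewrite /gp gVM gVV gKr' eqxx /= -gA gKr'.
by case: ifP; rewrite ?mulr0 // -scalerAr mulr1.
Qed.

Lemma psumR (I : Type) (l : seq I) (F : I -> G -> G -> A) v g :
  psum (P := R) zR l F v g = \sum_(i <- l) F i v g.
Proof. by elim: l => /= [|i l ih]; rewrite ?big_nil ?big_cons ?ih. Qed.

Lemma psum_gp_io Phi K s : inbox Phi K ->
  psum (P := R) zR K (fun u => fun v g =>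
      if (v == gmul u s) && inH (gmul g (gmul u s)) then cH *: Phi u g else 0)
  = pr_mul R Phi (gp s).
Proof.
move=> hK; rewrite Phi_gp; apply: funext => v; apply: funext => g; rewrite psumR.
rewrite -(@sumG_fset _ _ K); last first.
  by move=> u hu; rewrite (inboxS _ hK hu) scaler0; case: ifP.
rewrite (sumG1 (a := gmul v (ginv s))); last first.
  move=> u ne; case: eqP => [e1|]; last by [].
  by move: ne; rewrite e1 gKr eqxx.
by rewrite gKr' eqxx /=.
Qed.

Lemma gp_rt t : pr_mul R (gp t) (rt t) =
  fun u g => if (u == one) && inH (gmul g t) then cH *: (1 : A) else 0.
Proof.
apply: funext => u; apply: funext => g; rewrite mulRE (sumG1 (a := t)); last first.
  by move=> w /negbTE ne; rewrite /gp ne mul0r.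
rewrite /gp /rt eqxx /=; case hg: (inH (gmul g t)); rewrite ?andbF ?mul0r //.
rewrite !andbT; have -> : (gmul (ginv t) u == ginv t) = (u == one).
  by apply/eqP/eqP => [e1|->]; [apply: (gmulI (x := ginv t)); rewrite e1 g1r | rewrite g1r].
by case: ifP; rewrite ?mulr1 ?mulr0.
Qed.

Lemma rt_gp t s : pr_mul R (rt t) (gp s) =
  fun u g => if (u == gmul (ginv t) s) && inH g && inH (gmul (ginv t) s) then cH *: (1 : A) else 0.
Proof.
apply: funext => u; apply: funext => g; rewrite mulRE (sumG1 (a := ginv t)); last first.
  by move=> w /negbTE ne; rewrite /rt ne mul0r.
rewrite /rt /gp eqxx /= gVV; case hg: (inH g); rewrite ?mul0r ?andbF //= mul1r.
have -> : (gmul t u == s) = (u == gmul (ginv t) s).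
  by apply/eqP/eqP => [<-|->]; rewrite ?gKl ?gKl'.
by rewrite -gA inHMl ?andbT //; apply/inHP; exact: hg.
Qed.

Lemma Wk_io k : H k -> pr_mul R (Wk k) (io (dl (ginv k))) = Ec.
Proof.
move=> hk; apply: funext => u; apply: funext => g; rewrite mulRE (sumG1 (a := k)); last first.
  by move=> w /negbTE ne; rewrite /Wk ne mul0r.
rewrite /Wk /Ec /io /dl /be eqxx /=; case hg: (inH g); rewrite ?mul0r ?andbF //.
have -> : (gmul (ginv k) u == ginv k) = (u == one).
  by apply/eqP/eqP => [e1|->]; [apply: (gmulI (x := ginv k)); rewrite e1 g1r | rewrite g1r].
case: (eqVneq u one) => [->|ne] /=.
  rewrite g1r inHV inHMr // hg (_ : inH k = true) /=; last by apply/inHP.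
  by rewrite act_1 ?mulr1 //; apply: HM => //; exact: inHW.
by case: ifP => [/andP[_ /inHW hgk]|_]; rewrite ?act0 ?mulr0.
Qed.

Lemma io_rt k s : H k -> pr_mul R (io (dl k)) (rt s) = rt (gmul s (ginv k)).
Proof.
move=> hk; apply: funext => u; apply: funext => g; rewrite mulRE (sumG1 (a := k)); last first.
  move=> w ne; rewrite /io /dl /be (negbTE ne).
  by case: ifP; rewrite ?mul0r // => /andP[_ /inHW hg]; rewrite act0 // mul0r.
rewrite /io /dl /be /rt eqxx (_ : inH k = true); last by apply/inHP.
case hg: (inH g) => /=; last by rewrite mul0r andbF.
rewrite act_1; last exact: inHW.
rewrite mul1r inHMr // hg !andbT gVM gVV.
by congr (if _ then _ else _); apply/eqP/eqP => [<-|->]; rewrite ?gKl ?gKl'.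
Qed.

Lemma e_rt t : pr_mul R e (rt t) = rt t.
Proof.
apply: funext => u; apply: funext => g; rewrite mulRE (sumG1 (a := one)); last first.
  by move=> w /negbTE ne; rewrite eE ne mul0r.
rewrite eE eqxx gV1 g1l g1r /= /rt; case: (inH g); rewrite ?mul1r ?mul0r //.
by rewrite andbF.
Qed.


Lemma rt_kill x B t : inbox x B -> ginv t \notin HX B -> pr_mul R (rt t) x = zR.
Proof.
move=> hB ht; apply: funext => u; apply: funext => g; rewrite mulRE (sumG1 (a := ginv t)); last first.
  by move=> w /negbTE ne; rewrite /rt ne mul0r.
rewrite /rt eqxx /=; case hg: (inH g); last by rewrite mul0r.
rewrite (inboxG _ hB) ?mulr0 //; apply: contra ht => hgB.
by rewrite -(HX_inv _ _ (inHW hg)); apply: HX_sub.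
Qed.

Definition T0 (B : {fset G}) := [fset ginv y | y in HX B]%fset.

Lemma T0_out B t : t \notin T0 B -> ginv t \notin HX B.
Proof. by apply: contra => h; apply/imfsetP; exists (ginv t); rewrite ?gVV. Qed.

Definition Zt t : G -> G -> A :=
  fun u g => if (u == one) && inH (gmul g t) then cH *: (1 : A) else 0.

Lemma Zs_x x B : inbox x B -> pr_mul R (psum (P := R) zR (T0 B) Zt) x = x.
Proof.
move=> hB; apply: funext => u; apply: funext => g; rewrite mulRE (sumG1 (a := one)); last first.
  move=> w /negbTE ne; rewrite psumR big1 ?mul0r // => i _; by rewrite /Zt ne.
rewrite gV1 g1l g1r psumR.
case: (eqVneq (x u g) 0) => [->|nz]; first by rewrite mulr0.
have /andP[_ gB] := inbox_nz hB nz.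
rewrite (eq_bigr (fun t => if inH (gmul g t) then cH *: (1 : A) else 0)); last first.
  by move=> t _; rewrite /Zt eqxx.
rewrite sum_if_const.
have -> : count (fun t => inH (gmul g t)) (T0 B) = nH.
  rewrite -(@count_coset (T0 B) (ginv g)); first by apply: eq_count => t; rewrite gVV.
  move=> h hh; apply/imfsetP; exists (gmul (ginv h) g); last by rewrite gVM gVV.
  by apply: HX_in => //; exact: HV.
by rewrite cH1 mul1r.
Qed.

Lemma io_al0 : io (al 0) = zR.
Proof.
apply: funext => u; apply: funext => g; rewrite /io /al /be.
by case: ifP => // /andP[_ /inHW hg]; case: ifP => _; exact: act0.
Qed.

Lemma actR_z (M : lmodule R) m : lm_act M zR m = 0.
Proof. exact: (lm_act_z zR_mem zR_add). Qed.

Lemma um_box (M : umodule R) (m : M) : exists l B,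
  (forall p, List.In p l -> memR p.1 /\ inbox p.1 B) /\ m = \sum_(p <- l) lm_act M p.1 p.2.
Proof.
have [l [hl ->]] := um_unital m.
have hm : forall t, List.In t (map fst l) -> memR t.
  by move=> t /List.in_map_iff [p [<- pl]]; exact: hl.
have [B hB] := fset_of_seq hm.
exists l, B; split => // p pl; split; first exact: hl.
by apply: hB; apply: List.in_map.
Qed.

Lemma act_decomp (M : lmodule R) r (l : seq (pr_car R * M)) : memR r ->
  (forall p, List.In p l -> memR p.1) ->
  lm_act M r (\sum_(p <- l) lm_act M p.1 p.2) = \sum_(p <- l) lm_act M (pr_mul R r p.1) p.2.
Proof.
move=> mr hl; rewrite (lm_act_sum _ _ mr); apply: sum_In => p pl.
by rewrite lm_mulA //; exact: hl.
Qed.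


Section EtaDef.
Variable M : umodule R.

Definition mm (xi : GG (FF M)) t : M := szv (szv xi t).

Lemma mm_fsup (xi : GG (FF M)) : exists K : {fset G}, forall t, t \notin K -> mm xi t = 0.
Proof. by have [[K hK] _] := szp xi; exists K => t /hK; rewrite /mm => ->. Qed.

Lemma mm_inv (xi : GG (FF M)) t k : H k ->
  mm xi (gmul t k) = lm_act M (io (dl (ginv k))) (mm xi t).
Proof. by move=> hk; have [_ hx] := szp xi; rewrite /mm (hx t k hk). Qed.

Lemma mm_e (xi : GG (FF M)) t : lm_act M e (mm xi t) = mm xi t.
Proof. exact: (szp (szv xi t)). Qed.

Definition etaf (xi : GG (FF M)) : M := sumG (fun t => lm_act M (gp t) (mm xi t)).

Lemma etaf_add x y : etaf (x + y) = etaf x + etaf y.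
Proof.
have [K hK] := mm_fsup x; have [K' hK'] := mm_fsup y.
rewrite /etaf -(@sumGD _ _ (K `|` K')%fset); first last.
- by move=> t; rewrite inE negb_or => /andP[_ /hK' ->]; rewrite (lm_act0 _ (gp_mem t)).
- by move=> t; rewrite inE negb_or => /andP[/hK -> _]; rewrite (lm_act0 _ (gp_mem t)).
by apply: eq_sumG => t; rewrite -lm_actD //; exact: gp_mem.
Qed.

Definition Pt (Phi : G -> G -> A) t u : G -> G -> A :=
  fun v g => if (v == t) && inH (gmul g t) then cH *: Phi u g else 0.

Lemma Pt_mem Phi t u : memR Phi -> memR (Pt Phi t u).
Proof. by move=> mP; rewrite /Pt -gp_io //; apply: memR_mul; [exact: gp_mem | exact: io_mem]. Qed.

Lemma Pt_out Phi K t u : inbox Phi K -> u \notin K -> Pt Phi t u = zR.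
Proof.
move=> hK hu; apply: funext => v; apply: funext => g.
by rewrite /Pt (inboxS _ hK hu) scaler0; case: ifP.
Qed.

Lemma etaf_act Phi : memR Phi -> forall xi, etaf (lm_act (GG (FF M)) Phi xi) = lm_act M Phi (etaf xi).
Proof.
move=> mP xi; have [K hK] := memR_box mP; have [Kx hKx] := mm_fsup xi.
pose T t u := lm_act M (Pt Phi t u) (mm xi (gmul (ginv u) t)).
have Tu t u : u \notin K -> T t u = 0 by move=> hu; rewrite /T (Pt_out _ hK hu) actR_z.
transitivity (sumG (fun t => sumG (fun u => T t u))).
  rewrite /etaf; apply: eq_sumG => t.
  have -> : mm (lm_act (GG (FF M)) Phi xi) t =
      sumG (fun u => lm_act M (io (al (Phi u (ginv t)))) (mm xi (gmul (ginv u) t))).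
    rewrite /mm; have -> : szv (lm_act (GG (FF M)) Phi xi) = actG Phi (szv xi) by exact: actGG_val.
    rewrite /actG (sumG_fset (K := K)); last by move=> u hu; exact: actG_termS hK hu.
    rewrite szv_sum; symmetry; apply: sumG_fset => u hu.
    by rewrite (inboxS _ hK hu) io_al0 actR_z.
  rewrite (@sumG_morph _ _ _ (lm_act M (gp t)) K); first last.
  - by move=> u hu; rewrite (inboxS _ hK hu) io_al0 actR_z.
  - by move=> a b; rewrite lm_actD //; exact: gp_mem.
  - exact: lm_act0 (gp_mem t).
  apply: eq_sumG => u; rewrite -lm_mulA; [|exact: gp_mem | exact: io_mem].
  by rewrite gp_io.
pose KK := [fset gmul a b | a in K, b in Kx]%fset.
rewrite (@sumG_exchange _ _ KK K (fun t u => T t u)); first last.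
- by move=> t u hu; exact: Tu.
- move=> t u ht; case: (boolP (u \in K)) => hu; last exact: Tu.
  rewrite /T hKx ?(lm_act0 _ (Pt_mem _ _ mP)) //.
  apply: contra ht => hs; apply/imfset2P; exists u => //; exists (gmul (ginv u) t) => //.
  by rewrite gKl'.
transitivity (sumG (fun u => sumG (fun s => lm_act M (Pt Phi (gmul u s) u) (mm xi s)))).
  apply: eq_sumG => u; rewrite (sumG_reindex u); apply: eq_sumG => s.
  by rewrite /T gKl.
rewrite (@sumG_exchange _ _ K Kx); first last.
- by move=> u s hs; rewrite hKx // (lm_act0 _ (Pt_mem _ _ mP)).
- by move=> u s hu; rewrite (Pt_out _ hK hu) actR_z.
rewrite /etaf (@sumG_morph _ _ _ (lm_act M Phi) Kx); first last.
- by move=> s hs; rewrite hKx // (lm_act0 _ (gp_mem s)).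
- by move=> a b; rewrite lm_actD.
- exact: lm_act0.
apply: eq_sumG => s; rewrite -lm_mulA //; last exact: gp_mem.
rewrite -(psum_gp_io s hK) (lm_act_psum zR_mem zR_add memR_add); last first.
  move=> u; exact: (Pt_mem (gmul u s) u mP).
apply: sumG_fset => u hu.
by rewrite (Pt_out _ hK hu) actR_z.
Qed.

Definition eta_h : mhom (GG (FF M)) M := MHom etaf_add etaf_act.

Lemma theta_e (m : M) t : lm_act M e (lm_act M (rt t) m) = lm_act M (rt t) m.
Proof. by rewrite -lm_mulA ?e_rt //; [exact: e_mem | exact: rt_mem]. Qed.

Definition th1 (m : M) t : FF M := @SubZ M (PeZ M) (lm_act M (rt t) m) (theta_e m t).

Lemma rt_fsup (m : M) : exists K : {fset G}, forall t, t \notin K -> lm_act M (rt t) m = 0.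
Proof.
have [l [B [hl ->]]] := um_box m; exists (T0 B) => t ht.
rewrite act_decomp //; [|exact: rt_mem | by move=> p /hl []].
transitivity (\sum_(p <- l) (0 : M)); last by rewrite big1.
apply: sum_In => p pl; have [mp bp] := hl p pl.
by rewrite (rt_kill bp (T0_out ht)) actR_z.
Qed.

Lemma th1_P (m : M) : PN (fun t => th1 m t).
Proof.
split.
  have [K hK] := rt_fsup m; exists K => t ht; apply: subz_eq; exact: hK.
move=> s h hh; apply: subz_eq => /=.
rewrite -lm_mulA; [|exact: io_mem | exact: rt_mem].
by rewrite io_rt ?gVV //; exact: HV.
Qed.

Definition theta (m : M) : GG (FF M) := @SubZ _ (PNZ (FF M)) (fun t => th1 m t) (th1_P m).

Lemma eta_theta m : etaf (theta m) = m.
Proof.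
have [l [B [hl em]]] := um_box m.
have hl1 : forall p, List.In p l -> memR p.1 by move=> p /hl [].
rewrite /etaf /mm /=.
rewrite (@sumG_fset _ _ (T0 B)); last first.
  move=> t ht; have [K hK] := rt_fsup m.
  rewrite em act_decomp //; last exact: rt_mem.
  rewrite (@sum_In _ _ l _ (fun _ => 0)) ?big1 ?(lm_act0 _ (gp_mem t)) //.
  by move=> p pl; have [mp bp] := hl p pl; rewrite (rt_kill bp (T0_out ht)) actR_z.
transitivity (lm_act M (psum (P := R) zR (T0 B) Zt) m).
  rewrite (lm_act_psum zR_mem zR_add memR_add); last first.
    move=> t; rewrite /Zt -gp_rt; apply: memR_mul; [exact: gp_mem | exact: rt_mem].
  apply: eq_bigr => t _; rewrite -lm_mulA ?gp_rt //; [exact: gp_mem | exact: rt_mem].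
have mZ : memR (psum (P := R) zR (T0 B) Zt).
  apply: (psum_mem zR_mem memR_add) => t.
  rewrite /Zt -gp_rt; apply: memR_mul; [exact: gp_mem | exact: rt_mem].
rewrite {1}em act_decomp //; rewrite [RHS]em; apply: sum_In => p pl.
by have [mp bp] := hl p pl; rewrite Zs_x.
Qed.

Lemma sum_nseq (V : zmodType) (T : Type) n (x : T) (y : V) :
  \sum_(i <- nseq n x) y = y *+ n.
Proof. by elim: n => [|n ih]; rewrite ?big_nil // big_cons ih mulrS. Qed.

Lemma Ec_nH : psum (P := R) zR (nseq nH tt) (fun _ => Ec) = e.
Proof.
apply: funext => u; apply: funext => g; rewrite psumR sum_nseq eE /Ec.
by case: ifP; rewrite ?cH1 ?mul0rn.
Qed.

Lemma theta_eta xi : theta (etaf xi) = xi.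
Proof.
apply: subz_eq; apply: funext => t; apply: subz_eq => /=.
have [Kx hKx] := mm_fsup xi.
have mrg s : memR (pr_mul R (rt t) (gp s)) by apply: memR_mul; [exact: rt_mem | exact: gp_mem].
rewrite /etaf (@sumG_morph _ _ _ (lm_act M (rt t)) Kx); first last.
- by move=> s hs; rewrite hKx // (lm_act0 _ (gp_mem s)).
- by move=> a b; rewrite lm_actD //; exact: rt_mem.
- exact: lm_act0 (rt_mem t).
rewrite (@sumG_fset _ _ Kx); last first.
  by move=> s hs; rewrite hKx // !(lm_act0 _ (gp_mem s)) (lm_act0 _ (rt_mem t)).
rewrite (eq_bigr (fun s => if inH (gmul (ginv t) s) then lm_act M Ec (mm xi t) else 0)); last first.
  move=> s _; rewrite -lm_mulA; [|exact: rt_mem | exact: gp_mem].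
  rewrite rt_gp; case hk: (inH (gmul (ginv t) s)); last first.
    rewrite (_ : (fun _ _ => _) = zR) ?actR_z //.
    by apply: funext => u; apply: funext => g; rewrite andbF.
  rewrite (_ : (fun _ _ => _) = Wk (gmul (ginv t) s)); last first.
    by apply: funext => u; apply: funext => g; rewrite andbT.
  rewrite -{2}(gKl' t s) mm_inv; last exact: (inHW hk).
  rewrite -lm_mulA ?Wk_io //; [exact: (inHW hk) | exact: Wk_mem | exact: io_mem].
rewrite sum_if_const -[szv (szv xi t)]/(mm xi t).
case: (eqVneq (mm xi t) 0) => [->|nz]; first by rewrite (lm_act0 _ Ec_mem) mul0rn.
rewrite (@count_coset Kx t); last first.
  move=> h hh; apply: contraT => /hKx h0; move: nz.
  by rewrite -(gKr h t) mm_inv ?gVV ?h0 ?(lm_act0 _ (io_mem _)) ?eqxx //; exact: HV.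
rewrite -[_ *+ nH](@sum_nseq _ _ nH tt) -(lm_act_psum zR_mem zR_add memR_add) //.
  by rewrite Ec_nH mm_e.
by move=> _; exact: Ec_mem.
Qed.

Lemma eta_bij : bijective eta_h.
Proof. by exists theta; [exact: theta_eta | exact: eta_theta]. Qed.

End EtaDef.

Lemma eta_nat (M N : umodule R) (f : mhom M N) x :
  f (eta_h M x) = eta_h N (Gm (Fm f) x).
Proof.
rewrite /= /etaf; have [Kx hKx] := mm_fsup x.
rewrite (@sumG_morph _ _ _ f Kx); first last.
- by move=> t ht; rewrite hKx // (lm_act0 _ (gp_mem t)).
- exact: mh_add.
- exact: mh0.
by apply: eq_sumG => t; rewrite mh_act //; exact: gp_mem.
Qed.


Lemma psumS (I : Type) (l : seq I) (F : I -> G -> A) v :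
  psum (P := S) zS l F v = \sum_(i <- l) F i v.
Proof. by elim: l => /= [|i l ih]; rewrite ?big_nil ?big_cons ?ih. Qed.

Lemma inH1 : inH one. Proof. apply/inHP; exact: H1. Qed.

Section EpsDef.
Variable N : umodule S.

Definition xx (z : FF (GG N)) : G -> N := szv (szv z).

Lemma actG_e (xi : G -> N) t :
  actG e xi t = if inH t then lm_act N (dl one) (xi t) else 0.
Proof.
rewrite /actG (sumG1 (a := one)); last first.
  by move=> u /negbTE ne; rewrite eE ne /= al0_act.
rewrite eE eqxx /= gV1 g1l inHV; case: ifP => _; last exact: al0_act.
by [].
Qed.

Lemma xx_e (z : FF (GG N)) t : xx z t = if inH t then lm_act N (dl one) (xx z t) else 0.
Proof.
have hz := szp z; rewrite /xx -{1}hz.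
have -> : szv (lm_act (GG N) e (szv z)) = actG e (szv (szv z)) by exact: actGG_val e_mem.
by rewrite actG_e.
Qed.

Lemma xx_inv (z : FF (GG N)) s : inH s -> xx z s = lm_act N (dl (ginv s)) (xx z one).
Proof.
move=> hs; have [_ hx] := szp (szv z).
by rewrite /xx -(hx one s (inHW hs)) g1l.
Qed.

Definition epsf (z : FF (GG N)) : N := xx z one.

Lemma epsf_add x y : epsf (x + y) = epsf x + epsf y. Proof. by []. Qed.

Lemma epsf_act r : pr_mem S r -> forall z, epsf (lm_act (FF (GG N)) r z) = lm_act N r (epsf z).
Proof.
move=> mr z; rewrite /epsf /xx /=.
have -> : szv (lm_act (GG N) (io r) (szv z)) = actG (io r) (szv (szv z)) by exact: actGG_val (io_mem r).
rewrite /actG gV1.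
rewrite (eq_sumG (F' := fun u => if inH u then lm_act N (be (r u) u) (xx z one) else 0)); last first.
  move=> u; rewrite /io inH1 andbT; case hu: (inH u); last exact: al0_act.
  rewrite act1 g1r; change (szv (szv z) (ginv u)) with (xx z (ginv u)).
  rewrite (xx_inv z); last by rewrite inHV.
  rewrite gVV -lm_mulA; [|exact: al_mem | exact: dl_mem (inHW hu)].
  by rewrite /al /dl mulS_be ?act1 ?mulr1 ?g1l //; [exact: H1 | exact: inHW].
rewrite (sumG_fH); last by move=> u /negbTE ->.
pose F u := if inH u then be (r u) u else zS.
rewrite (eq_big_seq (fun u => lm_act N (F u) (xx z one))); last first.
  by move=> u; rewrite fHE /F => ->.
rewrite -(lm_act_psum zS_mem zS_add memS_add); last first.
  by move=> u; rewrite /F; case: ifP => // /inHW hu; exact: be_mem.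
congr (lm_act N _ _); apply: funext => v; rewrite psumS -sumG_fH; last first.
  by move=> u; rewrite /F => /negbTE ->.
rewrite (sumG1 (a := v)); last first.
  move=> u ne; rewrite /F /be; case: ifP => _ //=.
  by rewrite eq_sym (negbTE ne).
rewrite /F /be; case: ifP => [_|/negbT hv] /=; first by rewrite eqxx.
by rewrite /zS mr // => /inHP hv'; rewrite hv' in hv.
Qed.

Definition eps_h : mhom (FF (GG N)) N := MHom epsf_add epsf_act.

Definition xin (n : N) : G -> N := fun s => if inH s then lm_act N (dl (ginv s)) n else 0.

Lemma xin_P n : PN (xin n).
Proof.
split.
  by exists (fset_set H) => s; rewrite fHE /xin => /negbTE ->.
move=> s h hh; rewrite /xin inHMr //; case hs: (inH s); last first.
  by rewrite (actS0 _ (dl_mem (HV hh))).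
rewrite -lm_mulA; [|exact: dl_mem (HV hh) | exact: dl_mem (HV (inHW hs))].
rewrite /dl mulS_be; [|exact: HV | exact: HV (inHW hs)].
by rewrite act_1 ?mulr1 ?gVM //; exact: HV.
Qed.

Definition xin1 (n : N) : GG N := @SubZ _ (PNZ N) (xin n) (xin_P n).

Lemma xin_e n : lm_act (GG N) e (xin1 n) = xin1 n.
Proof.
apply: subz_eq.
have -> : szv (lm_act (GG N) e (xin1 n)) = actG e (szv (xin1 n)) by exact: actGG_val e_mem.
apply: funext => t; rewrite actG_e /= /xin; case hs: (inH t) => //.
rewrite -lm_mulA ?dl_l //; [exact: dl_mem (HV (inHW hs)) | exact: dl_mem H1 | exact: dl_mem (HV (inHW hs))].
Qed.

Definition psi (n : N) : FF (GG N) := @SubZ _ (PeZ (GG N)) (xin1 n) (xin_e n).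

Lemma eps_psi n : epsf (psi n) = n.
Proof. by rewrite /epsf /xx /= /xin inH1 gV1 unitN. Qed.

Lemma psi_eps z : psi (epsf z) = z.
Proof.
apply: subz_eq; apply: subz_eq; apply: funext => s /=.
rewrite /xin /epsf -[szv (szv z) s]/(xx z s).
case hs: (inH s); first by rewrite (xx_inv z hs).
by rewrite xx_e hs.
Qed.

Lemma eps_bij : bijective eps_h.
Proof. by exists psi; [exact: psi_eps | exact: eps_psi]. Qed.

End EpsDef.

Lemma eps_nat (M N : umodule S) (f : mhom M N) x :
  f (eps_h M x) = eps_h N (Fm (Gm f) x).
Proof. by []. Qed.

Theorem main_morita : morita_equivalent R S.
Proof.
exists FF, Fm, GG, Gm, eta_h, eps_h; split; first exact: Fm_functor.
split; first exact: Gm_functor.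
split; first exact: eta_bij.
split; first exact: eta_nat.
split; first exact: eps_bij.
exact: eps_nat.
Qed.


End Main.

Theorem proposition3p1 (G : groupType) (H : set G) (A : algType CC)
    (act : G -> A -> A) :
  finite_subgroup H -> module_algebra H act ->
  has_local_units (smashG H act) /\ has_local_units (smashH H act) /\
  morita_equivalent (smashG H act) (smashH H act).
Proof.
move=> HH MA; split; first exact: (local_units_R HH MA).
split; first exact: (local_units_S HH MA).
exact: (main_morita HH MA).
Qed.
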